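(* Let $X$ be locally connected. If $(X,\mathbb{F})$ is sensitive, then $(\mathcal{F}(X),\overline{\mathbb{F}})$ is pointwise sensitive.
   Context: $(X,d)$ compact metric, $\mathbb{F}=(f_n)$ continuous self-maps, $\omega_n=f_n\circ\cdots\circ f_1$. Sensitive: there is $\delta>0$ such that for every $x$ and every neighborhood $U$ of $x$ there is $n$ with $\mathrm{diam}(\omega_n(U))>\delta$. Pointwise sensitive: for every point $x$ there is $\delta_x>0$ such that every neighborhood $U$ of $x$ admits $n$ with $\mathrm{diam}(\omega_n(U))>\delta_x$. $\mathcal{F}(X)$: non-empty finite subsets with the Hausdorff metric $d_H$; induced system $\overline{\omega}_n(A)=\omega_n(A)$, notions defined using $d_H$. *)

(* Defs.v *)
From Stdlib Require Import Reals List.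
Import ListNotations.
Open Scope R_scope.

Record Metric (X : Type) := {
  d : X -> X -> R;
  d_nonneg : forall x y, 0 <= d x y;
  d_eq0 : forall x y, d x y = 0 <-> x = y;
  d_sym : forall x y, d x y = d y x;
  d_tri : forall x y z, d x z <= d x y + d y z
}.
Arguments d {X} _ _ _.

Section MetricNotions.
Context {X : Type} (M : Metric X).

Definition mopen (U : X -> Prop) : Prop :=
  forall x, U x -> exists r, 0 < r /\ forall y, d M x y < r -> U y.

Definition mcompact : Prop :=
  forall (I : Type) (U : I -> X -> Prop),
    (forall i, mopen (U i)) -> (forall x, exists i, U i x) ->
    exists l : list I, forall x, exists i, In i l /\ U i x.

Definition mconnected (A : X -> Prop) : Prop :=
  forall U V, mopen U -> mopen V ->
    (forall x, A x -> U x \/ V x) ->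
    (exists x, A x /\ U x) -> (exists x, A x /\ V x) ->
    exists x, A x /\ U x /\ V x.

Definition mlocally_connected : Prop :=
  forall x U, mopen U -> U x ->
    exists V, mopen V /\ mconnected V /\ V x /\ forall y, V y -> U y.

Definition mcontinuous (f : X -> X) : Prop :=
  forall x eps, 0 < eps -> exists del, 0 < del /\
    forall y, d M x y < del -> d M (f x) (f y) < eps.
End MetricNotions.

(* Non-autonomous system: f k is the map f_(k+1); omega f n = f_n o ... o f_1. *)
Fixpoint omega {T : Type} (f : nat -> T -> T) (n : nat) : T -> T :=
  match n with
  | O => fun x => x
  | S k => fun x => f k (omega f k x)
  end.

Definition nbhd {T : Type} (dist : T -> T -> R) (x : T) (U : T -> Prop) : Prop :=
  exists r, 0 < r /\ forall y, dist x y < r -> U y.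

(* diam(w n (U)) > del, unfolded as existence of two points *)
Definition diam_image_gt {T : Type} (dist : T -> T -> R) (g : T -> T)
  (U : T -> Prop) (del : R) : Prop :=
  exists y z, U y /\ U z /\ dist (g y) (g z) > del.

Definition sensitive {T : Type} (dist : T -> T -> R) (w : nat -> T -> T) : Prop :=
  exists del, 0 < del /\ forall x U, nbhd dist x U ->
    exists n, (1 <= n)%nat /\ diam_image_gt dist (w n) U del.

Definition pointwise_sensitive {T : Type} (dist : T -> T -> R) (w : nat -> T -> T) : Prop :=
  forall x, exists del, 0 < del /\ forall U, nbhd dist x U ->
    exists n, (1 <= n)%nat /\ diam_image_gt dist (w n) U del.

(* F(X): non-empty finite subsets, represented by non-empty lists x0 :: l. *)
Definition FX (X : Type) : Type := (X * list X)%type.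
Definition elems {X : Type} (A : FX X) : list X := fst A :: snd A.

Definition Fmap {X : Type} (g : X -> X) (A : FX X) : FX X :=
  (g (fst A), map g (snd A)).

Definition pt_set_dist {X : Type} (M : Metric X) (x : X) (B : FX X) : R :=
  fold_right (fun z acc => Rmin (d M x z) acc) (d M x (fst B)) (snd B).

Definition maxl (x0 : R) (l : list R) : R := fold_right Rmax x0 l.

Definition dH {X : Type} (M : Metric X) (A B : FX X) : R :=
  Rmax (maxl (pt_set_dist M (fst A) B) (map (fun a => pt_set_dist M a B) (snd A)))
       (maxl (pt_set_dist M (fst B) A) (map (fun b => pt_set_dist M b A) (snd B))).

Definition Fsys {X : Type} (f : nat -> X -> X) : nat -> FX X -> FX X :=
  fun k => Fmap (f k).

(* Main.v *)
Require Import Defs.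
From Stdlib Require Import Reals List.
From Stdlib Require Import Lra Lia Classical.
Import ListNotations.
Open Scope R_scope.

Section Aux.
Context {X : Type} (M : Metric X).

Lemma dxx : forall x, d M x x = 0.
Proof. intro x. apply (proj2 (d_eq0 X M x x)). reflexivity. Qed.

Lemma foldmin_le_base (g : X -> R) : forall l v,
  fold_right (fun z acc => Rmin (g z) acc) v l <= v.
Proof.
  induction l; simpl; intros; [lra|]. specialize (IHl v).
  pose proof (Rmin_r (g a) (fold_right (fun z acc => Rmin (g z) acc) v l)). lra.
Qed.

Lemma foldmin_le_in (g : X -> R) : forall l v z, In z l ->
  fold_right (fun z acc => Rmin (g z) acc) v l <= g z.
Proof.
  induction l; simpl; intros v z H; [contradiction|]. destruct H as [<-|H].
  - apply Rmin_l.
  - specialize (IHl v z H).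
    pose proof (Rmin_r (g a) (fold_right (fun z acc => Rmin (g z) acc) v l)). lra.
Qed.

Lemma foldmin_ge (g : X -> R) e : forall l v, e <= v -> (forall z, In z l -> e <= g z) ->
  e <= fold_right (fun z acc => Rmin (g z) acc) v l.
Proof.
  induction l; simpl; intros v Hv H; [lra|].
  apply Rmin_glb; auto.
Qed.

Lemma psd_le p B b : In b (elems B) -> pt_set_dist M p B <= d M p b.
Proof.
  unfold pt_set_dist, elems. simpl. intros [<-|H].
  - apply foldmin_le_base.
  - apply foldmin_le_in; auto.
Qed.

Lemma psd_ge p B e : (forall b, In b (elems B) -> e <= d M p b) -> e <= pt_set_dist M p B.
Proof.
  unfold pt_set_dist, elems. simpl. intros H.
  apply foldmin_ge; auto.
Qed.

Lemma maxl_base : forall l v, v <= maxl v l.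
Proof.
  unfold maxl; induction l; simpl; intros; [lra|].
  specialize (IHl v). pose proof (Rmax_r a (fold_right Rmax v l)). lra.
Qed.

Lemma maxl_in : forall l v w, In w l -> w <= maxl v l.
Proof.
  unfold maxl; induction l; simpl; intros v w H; [contradiction|].
  destruct H as [<-|H]. apply Rmax_l.
  specialize (IHl v w H). pose proof (Rmax_r a (fold_right Rmax v l)). lra.
Qed.

Lemma maxl_lt r : forall l v, v < r -> (forall w, In w l -> w < r) -> maxl v l < r.
Proof.
  unfold maxl; induction l; simpl; intros v Hv H; auto.
  apply Rmax_lub_lt; auto.
Qed.

Lemma dH_lt A B r :
  (forall a, In a (elems A) -> exists b, In b (elems B) /\ d M a b < r) ->
  (forall b, In b (elems B) -> exists a, In a (elems A) /\ d M b a < r) ->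
  dH M A B < r.
Proof.
  intros H1 H2. unfold dH. apply Rmax_lub_lt; apply maxl_lt.
  - destruct (H1 (fst A)) as [b [Hb Hd]]. left; reflexivity.
    pose proof (psd_le (fst A) B b Hb). lra.
  - intros w Hw. apply in_map_iff in Hw. destruct Hw as [a [<- Ha]].
    destruct (H1 a) as [b [Hb Hd]]. right; auto.
    pose proof (psd_le a B b Hb). lra.
  - destruct (H2 (fst B)) as [b [Hb Hd]]. left; reflexivity.
    pose proof (psd_le (fst B) A b Hb). lra.
  - intros w Hw. apply in_map_iff in Hw. destruct Hw as [a [<- Ha]].
    destruct (H2 a) as [b [Hb Hd]]. right; auto.
    pose proof (psd_le a A b Hb). lra.
Qed.

Lemma dH_ge A B b e : In b (elems B) -> (forall a, In a (elems A) -> e <= d M b a) ->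
  e <= dH M A B.
Proof.
  intros Hb H. unfold dH.
  eapply Rle_trans; [|apply Rmax_r].
  assert (e <= pt_set_dist M b A) by (apply psd_ge; auto).
  destruct Hb as [<-|Hb].
  - eapply Rle_trans; [eassumption|apply maxl_base].
  - eapply Rle_trans; [eassumption|apply maxl_in].
    apply in_map_iff. eauto.
Qed.

Lemma comp_cont g h : mcontinuous M g -> mcontinuous M h -> mcontinuous M (fun x => g (h x)).
Proof.
  intros Hg Hh x eps He.
  destruct (Hg (h x) eps He) as [d1 [Hd1 H1]].
  destruct (Hh x d1 Hd1) as [d2 [Hd2 H2]].
  exists d2; split; auto.
Qed.

Lemma open_lt g p t : mcontinuous M g -> mopen M (fun x => d M p (g x) < t).
Proof.
  intros Hg x Hx.
  destruct (Hg x (t - d M p (g x))) as [de [Hde H]]. lra.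
  exists de; split; auto. intros y Hy. specialize (H y Hy).
  pose proof (d_tri X M p (g x) (g y)). lra.
Qed.

Lemma open_gt g p t : mcontinuous M g -> mopen M (fun x => t < d M p (g x)).
Proof.
  intros Hg x Hx.
  destruct (Hg x (d M p (g x) - t)) as [de [Hde H]]. lra.
  exists de; split; auto. intros y Hy. specialize (H y Hy).
  pose proof (d_tri X M p (g y) (g x)). rewrite (d_sym X M (g y) (g x)) in H0. lra.
Qed.

End Aux.

Lemma pigeon (eps : R) : 0 < eps -> forall (cs : list R) (js : list nat), NoDup js ->
  (length cs < length js)%nat ->
  exists j, In j js /\ forall c, In c cs -> eps <= Rabs (2 * eps * INR j - c).
Proof.
  intros He. induction cs as [|c cs IH]; intros js Hnd Hl.
  - destruct js as [|j js]; simpl in Hl; [lia|]. exists j; split; [left; auto|].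
    intros c [].
  - destruct (classic (exists j0, In j0 js /\ Rabs (2 * eps * INR j0 - c) < eps))
      as [[j0 [Hj0 Hc]]|Hno].
    + destruct (in_split _ _ Hj0) as [l1 [l2 ->]].
      destruct (IH (l1 ++ l2)) as [j [Hj Hf]].
      * eapply NoDup_remove_1; eauto.
      * rewrite length_app in *; simpl in *; lia.
      * exists j; split.
        -- apply in_app_or in Hj; apply in_or_app; simpl; tauto.
        -- intros c' [<-|Hc']; auto.
           assert (j <> j0).
           { intro; subst. eapply NoDup_remove_2; eauto. }
           assert (1 <= Rabs (INR j - INR j0)).
           { destruct (Nat.lt_trichotomy j j0) as [Hlt|[Heq|Hlt]]; [|contradiction|].
             - assert (INR (S j) <= INR j0) as HH by (apply le_INR; lia). rewrite S_INR in HH.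
               rewrite Rabs_left1; lra.
             - assert (INR (S j0) <= INR j) as HH by (apply le_INR; lia). rewrite S_INR in HH.
               rewrite Rabs_right; lra. }
           revert Hc H0. unfold Rabs; repeat destruct Rcase_abs; intros; nra.
    + destruct (IH js Hnd) as [j [Hj Hf]]. simpl in Hl; lia.
      exists j; split; auto. intros c' [<-|Hc']; auto.
      apply Rnot_lt_le. intro. apply Hno. eauto.
Qed.

Lemma omega_F {X : Type} (f : nat -> X -> X) : forall n B,
  omega (Fsys f) n B = Fmap (omega f n) B.
Proof.
  induction n; intros B; simpl.
  - unfold Fmap. destruct B; simpl. rewrite map_id. reflexivity.
  - rewrite IHn. unfold Fsys, Fmap; simpl. rewrite map_map. reflexivity.
Qed.

Theorem mainTheorem11 (X : Type) (M : Metric X) (f : nat -> X -> X) :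
  mcompact M ->
  (forall k, mcontinuous M (f k)) ->
  mlocally_connected M ->
  sensitive (d M) (omega f) ->
  pointwise_sensitive (dH M) (omega (Fsys f)).
Proof.
  intros _ Hc Hlc [del [Hdel Hs]] A.
  assert (Hom : forall n, mcontinuous M (omega f n)).
  { induction n; simpl.
    - intros x e He; exists e; split; auto.
    - apply (comp_cont M (f n) (omega f n)); auto. }
  set (k := length (elems A)).
  assert (Hk : 0 <= INR k) by apply pos_INR.
  set (eps := del / (2 * (INR k + 2))).
  assert (Heps : 0 < eps) by (unfold eps; apply Rdiv_lt_0_compat; lra).
  assert (Heq : eps * (2 * (INR k + 2)) = del) by (unfold eps; field; lra).
  exists (eps / 2). split; [lra|].
  intros U [r [Hr HU]].
  destruct (Hlc (fst A) (fun x => d M (fst A) x < r)) as [V [HVo [HVc [HVa HVU]]]].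
  { intros x Hx. exists (r - d M (fst A) x). split; [lra|].
    intros y Hy. pose proof (d_tri X M (fst A) x y). lra. }
  { rewrite dxx; auto. }
  assert (Hnb : nbhd (d M) (fst A) V) by (apply HVo; auto).
  destruct (Hs _ _ Hnb) as [n [Hn [y [z [Vy [Vz Hyz]]]]]].
  set (g := omega f n) in *.
  destruct (pigeon eps Heps (map (fun a => d M (g y) (g a)) (elems A)) (seq 1 (S k)))
    as [j [Hj Hfar]].
  { apply seq_NoDup. }
  { rewrite length_map, length_seq. fold k. lia. }
  apply in_seq in Hj.
  set (t := 2 * eps * INR j).
  assert (Ht0 : 0 < t).
  { unfold t. assert (1 <= INR j) by (apply (le_INR 1); lia). nra. }
  assert (Ht1 : t < del).
  { unfold t. assert (INR j <= INR k + 1) by (rewrite <- S_INR; apply le_INR; lia). nra. }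
  assert (Hx : exists x, V x /\ d M (g y) (g x) = t).
  { apply NNPP; intro Hno.
    destruct (HVc (fun x => d M (g y) (g x) < t) (fun x => t < d M (g y) (g x)))
      as [x [_ [H1 H2]]].
    - apply open_lt; auto. apply Hom.
    - apply open_gt; auto. apply Hom.
    - intros x Vx. destruct (Rtotal_order (d M (g y) (g x)) t) as [H|[H|H]].
      + left; exact H.
      + exfalso; apply Hno; eauto.
      + right; exact H.
    - exists y; split; auto. rewrite dxx; auto.
    - exists z; split; auto. lra.
    - lra. }
  destruct Hx as [x [Vx Hxt]].
  exists n; split; auto.
  exists A, (fst A, x :: snd A).
  split; [|split].
  - apply HU. apply dH_lt; intros a Ha; exists a; split; auto; rewrite dxx; auto.
  - apply HU. apply dH_lt.
    + intros a Ha. exists a; split; [|rewrite dxx; auto].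
      destruct Ha as [<-|Ha]; [left; auto|right; right; auto].
    + intros b [<-|[<-|Hb]].
      * exists (fst A); split; [left; auto|rewrite dxx; auto].
      * exists (fst A); split; [left; auto|]. rewrite d_sym. apply HVU; auto.
      * exists b; split; [right; auto|rewrite dxx; auto].
  - rewrite !omega_F. fold g.
    assert (eps <= dH M (Fmap g A) (Fmap g (fst A, x :: snd A))); [|lra].
    apply (dH_ge M _ _ (g x)).
    + simpl. right; left; auto.
    + intros b Hb. change (elems (Fmap g A)) with (map g (elems A)) in Hb.
      apply in_map_iff in Hb. destruct Hb as [a [<- Ha]].
      assert (Hc1 := Hfar (d M (g y) (g a)) (in_map (fun a => d M (g y) (g a)) _ _ Ha)).
      fold t in Hc1. rewrite <- Hxt in Hc1.
      pose proof (d_tri X M (g y) (g x) (g a)).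
      pose proof (d_tri X M (g y) (g a) (g x)).
      rewrite (d_sym X M (g a) (g x)) in H0.
      revert Hc1. unfold Rabs; destruct Rcase_abs; intros; lra.
Qed.
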